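(* Two elements $\tau=(w,z)$ and $\tau'=(w',z')$ of $\mathcal K^J$ lie in the same $W$-orbit if and only if $z$ and $z'$ lie in the same $W_J$-conjugacy class in $\mathscr I_J$.
   Context: Let $(W,S)$ be a finite Coxeter system with length function $\ell$ and reflections $T=\{wsw^{-1}:w\in W,s\in S\}$. Let $\mathrm{Aut}(W,S)$ be the automorphisms $\varphi$ of $W$ with $\varphi(S)=S$, and $W^+=W\rtimes\mathrm{Aut}(W,S)$ the group of pairs $(w,\varphi)$ with $(v,\alpha)(w,\beta)=(v\,\alpha(w),\alpha\beta)$; set $\ell(w,\varphi)=\ell(w)$ and identify $w$ with $(w,1)$. $z\in W^+$ is a perfect involution if $z^2=1$ and $(zt)^4=1$ for all $t\in T$. For $J\subseteq S$: $W_J=\langle J\rangle$; $\mathscr I_J$ is the set of perfect involutions of $(W_J)^+=W_J\rtimes\mathrm{Aut}(W_J,J)$, on which $W_J$ acts by conjugation $v:(y,\theta)\mapsto(v\,y\,\theta(v)^{-1},\theta)$. $W^J=\{w\in W:\ell(ws)>\ell(w)\ \forall s\in J\}$, $\mathcal K^J=W^J\times\mathscr I_J$. For $s\in S$ and $\tau=(w,z)\in\mathcal K^J$: $s\tau=(sw,z)$ if $sw\in W^J$; otherwise $t:=w^{-1}sw\in J$ and $s\tau=(w,tzt)$. This extends to an action of $W$ on $\mathcal K^J$. *)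

(* Defs.v *)
From mathcomp Require Import all_boot all_fingroup.
Set Implicit Arguments. Unset Strict Implicit. Unset Printing Implicit Defensive.

Local Open Scope group_scope.

Section Coxeter.
Variable gT : finGroupType.

(* (W,S) with W := <<S>> is a (finite) Coxeter system: S consists of
   involutions, and W has the Coxeter presentation
   < S | (s t)^(m(s,t)) = 1 >, m(s,t) = order of s t, expressed by the
   universal property of the presentation (tested against finite groups). *)
Definition coxeter_system (S : {set gT}) : Prop :=
  1 \notin S /\
  (forall s, s \in S -> s ^+ 2 = 1) /\
  forall (hT : finGroupType) (f : gT -> hT),
    (forall s t, s \in S -> t \in S -> (f s * f t) ^+ #[s * t] = 1) ->
    exists phi : {morphism <<S>> >-> hT}, forall s, s \in S -> phi s = f s.

Definition ball (S : {set gT}) (k : nat) : {set gT} :=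
  iter k (fun B : {set gT} => B :|: (B * S)) [set 1].

(* length function: least k such that w is a product of k elements of S
   (every element of <<S>> has length <= #|gT|) *)
Definition clen (S : {set gT}) (w : gT) : nat :=
  find (fun k => w \in ball S k) (iota 0 #|gT|.+1).

(* minimal left coset representatives W^J *)
Definition minrep (S J : {set gT}) : {set gT} :=
  [set w in <<S>> | [forall s in J, clen S w < clen S (w * s)]].

Definition refls (J : {set gT}) : {set gT} :=
  [set w * s * w^-1 | w in <<J>>, s in J].

Definition AutS (J : {set gT}) : {set {perm gT}} :=
  [set a in Aut <<J>> | a @: J == J].

(* elements of the semidirect product  W_J x| Aut(W_J,J) *)
Definition sd := (gT * {perm gT})%type.

(* (v,a)(w,b) = (v a(w), a b), where a b is the composite x |-> a (b x),
   i.e. the perm product b * a in MathComp's convention *)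
Definition sdmul (x y : sd) : sd := (x.1 * x.2 y.1, y.2 * x.2).
Definition sdone : sd := (1, 1).
Definition sdpow (x : sd) (n : nat) : sd := iter n (sdmul x) sdone.

Definition perfect_inv (J : {set gT}) (z : sd) : bool :=
  [&& z.1 \in <<J>>, z.2 \in AutS J, sdmul z z == sdone &
      [forall t in refls J, sdpow (sdmul z (t, 1)) 4 == sdone]].

Definition conjI (v : gT) (z : sd) : sd := (v * z.1 * (z.2 v)^-1, z.2).

(* action of a generator s on K^J = W^J x I_J *)
Definition kstep (S J : {set gT}) (s : gT) (tau : gT * sd) : gT * sd :=
  let w := tau.1 in let z := tau.2 in
  if s * w \in minrep S J then (s * w, z)
  else let t := w^-1 * s * w in (w, sdmul (sdmul (t, 1) z) (t, 1)).

(* same W-orbit: W is generated (as a monoid) by S, and w = s1...sk acts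
   as s1 (s2 (... (sk tau))) *)
Definition same_orbit (S J : {set gT}) (tau tau' : gT * sd) : Prop :=
  exists ss : seq gT, all (fun s => s \in S) ss /\
                      tau' = foldr (kstep S J) tau ss.

End Coxeter.

(* Main.v *)
Require Import Defs.
From mathcomp Require Import all_boot all_fingroup zify.
Set Implicit Arguments. Unset Strict Implicit. Unset Printing Implicit Defensive.
Local Open Scope group_scope.

Section Basics.
Variable gT : finGroupType.
Implicit Types (S A : {set gT}) (ss : seq gT).

Definition pr ss : gT := \prod_(a <- ss) a.

Lemma pr_nil : pr [::] = 1. Proof. by rewrite /pr big_nil. Qed.
Lemma pr_cons a ss : pr (a :: ss) = a * pr ss. Proof. by rewrite /pr big_cons. Qed.
Lemma pr_cat s1 s2 : pr (s1 ++ s2) = pr s1 * pr s2. Proof. by rewrite /pr big_cat. Qed.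
Lemma pr_rcons s a : pr (rcons s a) = pr s * a.
Proof. by rewrite -cats1 pr_cat pr_cons pr_nil mulg1. Qed.

Lemma pr_gen A ss : all (mem A) ss -> pr ss \in <<A>>.
Proof.
elim: ss => [|a ss IH] /=; first by move=> _; rewrite pr_nil; apply: group1.
by case/andP=> Ha Hs; rewrite pr_cons; apply: groupM; [apply: mem_gen | apply: IH].
Qed.

Lemma gen_word A x : x \in <<A>> -> exists ss, all (mem A) ss /\ x = pr ss.
Proof.
case/gen_prodgP=> n [c Hc ->].
exists [seq c i | i <- index_enum 'I_n]; split.
  by apply/allP=> y /mapP [i _ ->]; apply: Hc.
by rewrite /pr big_map.
Qed.

Lemma ballS S k : ball S k.+1 = ball S k :|: ball S k * S.
Proof. by []. Qed.

Lemma ballP S k x : reflect (exists ss, [/\ all (mem S) ss, size ss <= k & x = pr ss])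
                           (x \in ball S k).
Proof.
apply: (iffP idP).
  elim: k x => [|k IH] x.
    by rewrite /ball /= inE => /eqP ->; exists [::]; rewrite pr_nil.
  rewrite ballS inE => /orP [/IH [ss [H1 H2 H3]]|].
    by exists ss; split => //; apply: leqW.
  case/mulsgP=> y s /IH [ss [H1 H2 ->]] Hs ->.
  exists (rcons ss s); rewrite pr_rcons size_rcons ltnS H2; split => //.
  by rewrite -cats1 all_cat H1 /= Hs.
elim: k x => [|k IH] x [ss [H1 H2 ->]].
  by move: H2; rewrite leqn0 size_eq0 => /eqP ->; rewrite pr_nil /ball /= inE.
rewrite ballS inE; case: (lastP ss) H1 H2 => [|p a].
  by move=> _ _; rewrite IH //; exists [::].
rewrite -cats1 all_cat size_cat addn1 ltnS /= andbT => /andP [Hp Ha] Hsz.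
apply/orP; right; rewrite pr_cat pr_cons pr_nil mulg1 mem_mulg //.
by apply: IH; exists p.
Qed.

Lemma ball_mono S k k' : k <= k' -> ball S k \subset ball S k'.
Proof.
move=> H; apply/subsetP=> x /ballP [ss [H1 H2 H3]]; apply/ballP; exists ss; split=> //.
exact: leq_trans H2 H.
Qed.

Lemma ball_stable S : exists2 k, k <= #|gT| & forall j, k <= j -> ball S j = ball S k.
Proof.
have [/existsP [k /eqP Hk]|Hne] := boolP [exists k : 'I_#|gT|, ball S k == ball S k.+1].
  exists k; first exact: ltnW.
  move=> j /subnKC <-; elim: (j - k) => [|i IH]; first by rewrite addn0.
  by rewrite addnS ballS IH -ballS Hk.
have card_ball : forall k, k <= #|gT| -> k < #|ball S k|.
  elim=> [|k IH] Hk.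
    by rewrite /ball /= cards1.
  apply: leq_ltn_trans (IH (ltnW Hk)) _; apply: proper_card.
  rewrite properEneq ball_mono // andbT.
  apply: contra Hne => /eqP E; apply/existsP; exists (Ordinal Hk); by rewrite E.
by have := card_ball _ (leqnn _); rewrite ltnNge max_card.
Qed.

Lemma gen_ball S x : x \in <<S>> -> x \in ball S #|gT|.
Proof.
case/gen_word=> ss [H1 ->].
have [k Hk Hst] := ball_stable S.
have Hx : pr ss \in ball S (maxn k (size ss)).
  by apply/ballP; exists ss; split => //; apply: leq_maxr.
by rewrite Hst ?leq_maxl // in Hx; apply: (subsetP (ball_mono S Hk)).
Qed.

Lemma ball_gen S k x : x \in ball S k -> x \in <<S>>.
Proof. by case/ballP=> ss [H1 _ ->]; apply: pr_gen. Qed.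

Lemma clen_spec S x : x \in <<S>> ->
  x \in ball S (clen S x) /\ forall k, x \in ball S k -> clen S x <= k.
Proof.
move=> Hx; have Hb := gen_ball Hx.
have Hhas : has (fun k => x \in ball S k) (iota 0 #|gT|.+1).
  by apply/hasP; exists #|gT|; [rewrite mem_iota /= add0n ltnSn | exact: Hb].
have Hlt : clen S x < #|gT|.+1 by move: Hhas; rewrite has_find size_iota.
split.
  by have := nth_find 0 Hhas; rewrite nth_iota.
move=> k Hk; rewrite leqNgt; apply/negP=> Hkl.
have := before_find 0 Hkl; rewrite nth_iota ?Hk //.
by apply: ltn_trans Hkl Hlt.
Qed.

Lemma clen_word S ss : all (mem S) ss -> clen S (pr ss) <= size ss.
Proof.
move=> H; have Hg := pr_gen H; apply: (proj2 (clen_spec Hg)).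
by apply/ballP; exists ss.
Qed.

Lemma red_word S x : x \in <<S>> ->
  exists ss, [/\ all (mem S) ss, size ss = clen S x & x = pr ss].
Proof.
move=> Hx; have [/ballP [ss [H1 H2 H3]] _] := clen_spec Hx.
exists ss; split=> //; apply/eqP; rewrite eqn_leq H2 /= H3; exact: clen_word.
Qed.

Lemma clenM S x y : x \in <<S>> -> y \in <<S>> -> clen S (x * y) <= clen S x + clen S y.
Proof.
move=> /red_word [s1 [H1 <- ->]] /red_word [s2 [H2 <- ->]].
by rewrite -pr_cat -size_cat clen_word // all_cat H1.
Qed.

Lemma clen1 S : clen S 1 = 0.
Proof.
apply/eqP; rewrite -leqn0; apply: (proj2 (clen_spec (group1 _))).
by rewrite /ball /= inE.
Qed.

Lemma clen_gen1 S s : s \in S -> clen S s <= 1.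
Proof. move=> Hs; have := @clen_word S [:: s]; rewrite pr_cons pr_nil mulg1; apply; by rewrite /= andbT. Qed.

Lemma clen_eq1 S s : 1 \notin S -> s \in S -> clen S s = 1%N.
Proof.
move=> H1 Hs; apply/eqP; rewrite eqn_leq clen_gen1 // lt0n.
apply/negP => /eqP E.
have [Hb _] := clen_spec (mem_gen Hs); move: Hb; rewrite E /ball /= inE => /eqP E1.
by rewrite -E1 Hs in H1.
Qed.

End Basics.
Section Cox.
Variable gT : finGroupType.
Implicit Types (ss : seq gT).

Fixpoint tseq ss : seq gT :=
  if ss is a :: ss' then a :: map (fun t => a * t * a^-1) (tseq ss') else [::].

Definition fmap (a : gT) (p : gT * bool) : gT * bool :=
  (a^-1 * p.1 * a, p.2 (+) (p.1 == a)).

Lemma fmap_inj a : injective (fmap a).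
Proof.
move=> [x b] [y c] [E1 E2].
have Exy : x = y by apply: (mulIg a); apply: (mulgI a^-1); rewrite !mulgA.
by move: E2; rewrite /= Exy => /addIb ->.
Qed.

Definition fp a : {perm gT * bool} := perm (@fmap_inj a).

Lemma conj_eq (a t x : gT) : (a * t * a^-1 == x) = (t == a^-1 * x * a).
Proof.
apply/eqP/eqP => [<-|->].
  by rewrite !mulgA mulVg mul1g mulgKV.
by rewrite !mulgA mulgV mul1g mulgK.
Qed.

Lemma fp_word ss x b :
  (\prod_(a <- ss) fp a) (x, b) = ((pr ss)^-1 * x * pr ss, b (+) odd (count_mem x (tseq ss))).
Proof.
elim: ss x b => [|a ss IH] x b.
  by rewrite big_nil perm1 pr_nil invg1 mulg1 mul1g /= addbF.
rewrite big_cons permM permE /fmap /= IH pr_cons invMg; congr pair.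
  by rewrite !mulgA.
rewrite oddD oddb addbA eq_sym count_map; congr (_ (+) odd _).
by apply: eq_count => t /=; rewrite conj_eq.
Qed.

Fixpoint alt (s t : gT) m : seq gT := if m is m'.+1 then s :: t :: alt s t m' else [::].

Lemma prod_alt s t m : \prod_(a <- alt s t m) fp a = (fp s * fp t) ^+ m.
Proof. by elim: m => [|m IH]; rewrite ?big_nil ?expg0 // !big_cons IH expgS mulgA. Qed.

Lemma pr_alt s t m : pr (alt s t m) = (s * t) ^+ m.
Proof. by elim: m => [|m IH]; rewrite ?pr_nil ?expg0 // !pr_cons IH expgS mulgA. Qed.

Lemma tseq_alt s t m : s^-1 = s -> t^-1 = t ->
  tseq (alt s t m) = [seq (s * t) ^+ k * s | k <- iota 0 m.*2].
Proof.
move=> Hs Ht; elim: m => [|m IH] //.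
rewrite doubleS /= IH -!map_comp; congr (_ :: _ :: _).
  by rewrite expg0 mul1g.
  by rewrite expg1 Hs.
rewrite (iotaDl 2 0) -map_comp; apply: eq_map => k /=.
by rewrite Hs Ht add2n (expgS (s * t) k.+1) (expgSr (s * t) k) !mulgA.
Qed.

End Cox.
Section Cox2.
Variable gT : finGroupType.
Variable S : {set gT}.
Hypothesis HS : coxeter_system S.
Implicit Types (ss : seq gT).

Lemma S1 : 1 \notin S. Proof. by case: HS. Qed.
Lemma Sinv s : s \in S -> s^-1 = s.
Proof.
case: HS => _ [H _] Hs; have := H s Hs; rewrite expgS expg1 => E.
by rewrite -[LHS]mulg1 -E mulgA mulVg mul1g.
Qed.
Lemma Smul s : s \in S -> s * s = 1.
Proof. by move=> Hs; rewrite -{1}(Sinv Hs) mulVg. Qed.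

Lemma count_alt (u s x : gT) m : u ^+ m = 1 ->
  ~~ odd (count_mem x [seq u ^+ k * s | k <- iota 0 m.*2]).
Proof.
move=> Hm; rewrite -addnn iotaD add0n -[in iota m m](addn0 m) iotaDl map_cat count_cat.
rewrite -map_comp.
rewrite (@eq_map _ _ (fun k => u ^+ (m + k) * s) (fun k => u ^+ k * s)); last first.
  by move=> k /=; rewrite expgD Hm mul1g.
by rewrite oddD addn0 addbb.
Qed.

Lemma fp_rel s t : s \in S -> t \in S -> (fp s * fp t) ^+ #[s * t] = 1.
Proof.
move=> Hs Ht; apply/permP => [[x b]].
rewrite -prod_alt fp_word pr_alt expg_order invg1 mulg1 mul1g perm1.
by rewrite tseq_alt ?Sinv // (negbTE (count_alt s x (expg_order _))) addbF.
Qed.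

Lemma inv_count ss1 ss2 x : all (mem S) ss1 -> all (mem S) ss2 -> pr ss1 = pr ss2 ->
  odd (count_mem x (tseq ss1)) = odd (count_mem x (tseq ss2)).
Proof.
case: HS => _ [_ U].
have [phi Hphi] := U _ (@fp gT) (fun s t Hs Ht => fp_rel Hs Ht).
have Hw ss : all (mem S) ss -> phi (pr ss) = \prod_(a <- ss) fp a.
  elim: ss => [|a ss IH] /=; first by rewrite pr_nil big_nil morph1.
  case/andP=> Ha Hss; rewrite pr_cons big_cons morphM ?(mem_gen Ha) ?(pr_gen Hss) //.
  by rewrite Hphi // IH.
move=> H1 H2 E; have := congr1 (fun p : {perm gT * bool} => (p (x, false)).2) (congr1 phi E).
by rewrite /= !Hw // !fp_word /=; apply.
Qed.

Lemma tperm_exp n : (tperm false true ^+ n) false = odd n.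
Proof.
elim: n => [|n IH]; first by rewrite expg0 perm1.
by rewrite expgSr permM IH /=; case: (odd n); [rewrite tpermR | rewrite tpermL].
Qed.

Lemma inv_size ss1 ss2 : all (mem S) ss1 -> all (mem S) ss2 -> pr ss1 = pr ss2 ->
  odd (size ss1) = odd (size ss2).
Proof.
case: HS => _ [_ U].
have [phi Hphi] := U _ (fun _ => tperm false true)
  (fun s t _ _ => etrans (congr1 (fun p => p ^+ _) (tperm2 false true)) (expg1n _ _)).
have Hw ss : all (mem S) ss -> phi (pr ss) = tperm false true ^+ size ss.
  elim: ss => [|a ss IH] /=; first by rewrite pr_nil morph1 expg0.
  case/andP=> Ha Hss; rewrite pr_cons morphM ?(mem_gen Ha) ?(pr_gen Hss) //.
  by rewrite Hphi // IH //; exact: (esym (expgS _ _)).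
move=> H1 H2 E; have := congr1 (fun p : {perm bool} => p false) (congr1 phi E).
by rewrite /= !Hw // !tperm_exp; apply.
Qed.

End Cox2.
Section Cox3.
Variable gT : finGroupType.
Variables S J : {set gT}.
Hypothesis HS : coxeter_system S.
Hypothesis HJ : J \subset S.
Implicit Types (ss : seq gT).

Lemma tseq_del ss t : all (mem S) ss -> t \in tseq ss ->
  exists ss', [/\ all (mem S) ss', (size ss').+1 = size ss & t * pr ss = pr ss'].
Proof.
elim: ss t => [|a ss IH] t //= /andP [Ha Hss]; rewrite in_cons => /orP [/eqP ->|].
  by exists ss; split => //; rewrite pr_cons mulgA (Smul HS) // mul1g.
case/mapP=> t' Ht' ->; have [q [Hq Hsz Hp]] := IH _ Hss Ht'.
exists (a :: q); split => //=; first by rewrite Ha.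
  by rewrite Hsz.
by rewrite !pr_cons -Hp !mulgA mulgKV.
Qed.

Lemma tseq_rcons ss a : tseq (rcons ss a) = rcons (tseq ss) (pr ss * a * (pr ss)^-1).
Proof.
elim: ss => [|b ss IH] /=; first by rewrite pr_nil invg1 mulg1 mul1g.
by rewrite IH map_rcons pr_cons invMg !mulgA.
Qed.

Lemma clen_par_l s x : x \in <<S>> -> s \in S -> clen S (s * x) != clen S x.
Proof.
move=> Hx Hs; have [r [Hr <- Er]] := red_word Hx.
have [q [Hq <- Eq]] := red_word (groupM (mem_gen Hs) Hx).
have := inv_size HS (ss1 := q) (ss2 := s :: r); rewrite /= Hs Hr pr_cons -Er -Eq.
by move=> /(_ Hq isT erefl) H; apply/eqP => E; move: H; rewrite E; case: (odd _).
Qed.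

Lemma clen_par_r s x : x \in <<S>> -> s \in S -> clen S (x * s) != clen S x.
Proof.
move=> Hx Hs; have [r [Hr <- Er]] := red_word Hx.
have [q [Hq <- Eq]] := red_word (groupM Hx (mem_gen Hs)).
have := inv_size HS (ss1 := q) (ss2 := rcons r s).
rewrite size_rcons pr_rcons -Er -Eq -cats1 all_cat Hr /= Hs.
by move=> /(_ Hq isT erefl) H; apply/eqP => E; move: H; rewrite E; case: (odd _).
Qed.

Lemma exchange x s ss : s \in S -> all (mem S) ss -> x = pr ss ->
  clen S (s * x) < clen S x -> s \in tseq ss.
Proof.
move=> Hs Hss Ex Hlt; have Hx : x \in <<S>> by rewrite Ex pr_gen.
have [q [Hq Eqs Eq]] := red_word (groupM (mem_gen Hs) Hx).
have Hn : s \notin tseq q.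
  apply/negP => /(tseq_del Hq) [q' [Hq' Hsz Hp]].
  move: Hp; rewrite -Eq mulgA (Smul HS) // mul1g => Hp.
  have := clen_word Hq'; rewrite -Hp => H.
  have E : clen S (s * x) = (size q').+1 by rewrite -Eqs Hsz.
  by move/ltnW: (leq_trans Hlt H); rewrite E ltnn.
have := inv_count HS s Hss (ss2 := s :: q); rewrite /= Hs Hq pr_cons -Eq mulgA (Smul HS) // mul1g.
move=> /(_ isT (esym Ex)); rewrite eqxx count_map.
have Hc : count (preim (fun t => s * t * s^-1) (pred1 s)) (tseq q) = 0.
  rewrite -(count_memPn Hn); apply: eq_count => t /=.
  by rewrite conj_eq mulVg mul1g.
rewrite Hc /= => Hodd.
by apply/negPn/negP => /count_memPn H; move: Hodd; rewrite H.
Qed.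

Lemma minrepP w : reflect (w \in <<S>> /\ forall r, r \in J -> clen S w < clen S (w * r))
                          (w \in minrep S J).
Proof.
rewrite inE; apply: (iffP andP) => [[H /forall_inP H2]|[H H2]]; split => //.
by apply/forall_inP.
Qed.

Lemma deodhar w s : w \in minrep S J -> s \in S -> s * w \notin minrep S J ->
  w^-1 * s * w \in J.
Proof.
move=> /minrepP [Hw Hmin] Hs Hnm.
have HsS := mem_gen Hs; have Hsw : s * w \in <<S>> by rewrite groupM.
have HJS r : r \in J -> r \in S by move=> Hr; apply: (subsetP HJ).
have HwsS : forall r, r \in J -> s * w * r \in <<S>>.
  by move=> r Hr; rewrite groupM // mem_gen // HJS.
have H1 : clen S w <= clen S (s * w).
  rewrite leqNgt; apply/negP => Hlt; move/negP: Hnm; apply; apply/minrepP; split => // r Hr.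
  have E : w * r = s * (s * w * r) by rewrite !mulgA (Smul HS) // mul1g.
  have := clenM (mem_gen Hs) (HwsS r Hr); rewrite -E (clen_eq1 (S1 HS) Hs) => H.
  have := Hmin r Hr; lia.
move: Hnm; rewrite inE Hsw /= => /forall_inPn [r Hr Hnlt].
have HrS := HJS r Hr.
have Hwr : clen S (w * r) = (clen S w).+1.
  apply/eqP; rewrite eqn_leq Hmin // andbT.
  by have := clenM Hw (mem_gen HrS); rewrite (clen_eq1 (S1 HS) HrS) addn1.
have Hsw1 : clen S (s * w) <= (clen S w).+1.
  by have := clenM HsS Hw; rewrite (clen_eq1 (S1 HS) Hs) add1n.
have Hswr : clen S (s * w * r) < clen S (s * w).
  by rewrite ltn_neqAle clen_par_r // leqNgt.
have [rw [Hrw Erw Ew]] := red_word Hw.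
have Hx : s \in tseq (rcons rw r).
  apply: (exchange (x := w * r)) => //.
    by rewrite -cats1 all_cat Hrw /= HrS.
    by rewrite pr_rcons Ew.
  by rewrite mulgA Hwr; apply: leq_trans Hswr Hsw1.
move: Hx; rewrite tseq_rcons mem_rcons in_cons -Ew => /orP [/eqP ->|Hin].
  by rewrite !mulgA mulVg mul1g mulgKV.
have [q [Hq Hsz Hp]] := tseq_del Hrw Hin.
have := clen_word Hq; rewrite -Hp -Ew => H.
by move: (leq_trans H1 H); rewrite -Erw -Hsz ltnn.
Qed.

End Cox3.
Section Main.
Variable gT : finGroupType.
Variables S J : {set gT}.
Hypothesis HS : coxeter_system S.
Hypothesis HJ : J \subset S.
Implicit Types (ss : seq gT).

Lemma autM (a : {perm gT}) x y : a \in Aut <<J>> -> x \in <<J>> -> y \in <<J>> ->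
  a (x * y) = a x * a y.
Proof. by move=> Ha Hx Hy; have := morphM (autm_morphism Ha) Hx Hy; rewrite /= !autmE. Qed.

Lemma autV (a : {perm gT}) x : a \in Aut <<J>> -> x \in <<J>> -> a (x^-1) = (a x)^-1.
Proof. by move=> Ha Hx; have := morphV (autm_morphism Ha) Hx; rewrite /= !autmE. Qed.

Lemma aut1 (a : {perm gT}) : a \in Aut <<J>> -> a 1 = 1.
Proof. by move=> Ha; have := morph1 (autm_morphism Ha); rewrite /= !autmE. Qed.

Lemma step_conj (z : sd gT) t v : z.2 \in Aut <<J>> -> t \in J -> t^-1 = t -> v \in <<J>> ->
  sdmul (sdmul (t, 1) (conjI v z)) (t, 1) = conjI (t * v) z.
Proof.
move=> Ha Ht Hti Hv; have HtJ : t \in <<J>> by apply: mem_gen.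
rewrite /sdmul /conjI /= perm1 mulg1 mul1g; congr pair.
by rewrite autM // invMg -(autV Ha HtJ) Hti !mulgA.
Qed.

Lemma conjI1 (z : sd gT) : z.2 \in Aut <<J>> -> conjI 1 z = z.
Proof. by case: z => z1 z2 Ha; rewrite /conjI /= aut1 // invg1 mulg1 mul1g. Qed.

Definition good ss := [&& all (mem S) ss, size ss == clen S (pr ss) & pr ss \in minrep S J].

Lemma good_suffix p u : good (p ++ u) -> good u.
Proof.
case/and3P; rewrite all_cat size_cat pr_cat => /andP [Hp Hu] /eqP E /minrepP [_ Hm].
have Hpg := pr_gen Hp; have Hug := pr_gen Hu.
have Cp := clen_word Hp; have Cu := clen_word Hu; have Cpu := clenM Hpg Hug.
have Esz : size u = clen S (pr u).
  by apply/eqP; rewrite eqn_leq Cu andbT; move: Cpu; rewrite -E => Cpu; lia.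
apply/and3P; split => //; first by rewrite Esz.
apply/minrepP; split => // r Hr.
have HrS : r \in <<S>> by apply: mem_gen; apply: (subsetP HJ).
have := clenM Hpg (groupM Hug HrS); rewrite mulgA => C2.
move: (leq_trans (Hm r Hr) C2); rewrite -E Esz => C3.
rewrite -(ltn_add2l (size p)); apply: (leq_trans C3); by rewrite leq_add2r.
Qed.

Lemma up_aux u (z : sd gT) : (exists p, good (p ++ u)) -> foldr (kstep S J) (1, z) u = (pr u, z).
Proof.
elim: u => [|a u IH] [p Hp] /=; first by rewrite pr_nil.
rewrite IH; last by exists (rcons p a); rewrite cat_rcons.
have /and3P [_ _ Hm] := good_suffix Hp.
by rewrite /kstep /= -pr_cons Hm.
Qed.

Lemma down_aux p u (z : sd gT) : good (p ++ u) ->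
  foldr (kstep S J) (pr (p ++ u), z) (rev p) = (pr u, z).
Proof.
elim: p => [|a p IH] //= Hg.
rewrite rev_cons foldr_rcons.
have Hg' : good (p ++ u) by apply: (@good_suffix [:: a]).
have /and3P [/andP [Ha _] _ _] := Hg.
have /and3P [_ _ Hm] := Hg'.
rewrite /kstep /= pr_cons mulgA (Smul HS) // mul1g Hm /=.
exact: IH.
Qed.

Lemma conj_aux vs (z : sd gT) : z.2 \in Aut <<J>> -> all (mem J) vs ->
  foldr (kstep S J) (1, z) vs = (1, conjI (pr vs) z).
Proof.
move=> Ha; elim: vs => [|a vs IH] /=; first by rewrite pr_nil conjI1.
case/andP=> Ha' Hvs; rewrite IH //.
have HaS : a \in S by apply: (subsetP HJ).
have Hn : a * 1 \notin minrep S J.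
  apply/negP => /minrepP [_ /(_ a Ha')]; rewrite mulg1 (Smul HS) // clen1.
  by rewrite ltn0.
rewrite /kstep /= (negbTE Hn) invg1 mul1g !mulg1 pr_cons.
by rewrite step_conj // ?(Sinv HS) // pr_gen.
Qed.

End Main.

Theorem mainTheorem10 (gT : finGroupType) (S J : {set gT}) :
  coxeter_system S -> J \subset S ->
  forall (w w' : gT) (z z' : sd gT),
    w \in minrep S J -> perfect_inv J z ->
    w' \in minrep S J -> perfect_inv J z' ->
    (same_orbit S J (w, z) (w', z') <->
     exists2 v, v \in <<J>> & z' = conjI v z).
Proof.
move=> HS HJ w w' z z' Hw Hz Hw' Hz'.
have Ha : z.2 \in Aut <<J>>.
  by case/and4P: Hz => _; rewrite inE => /andP [].
split.
  case=> ss [Hss E].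
  have claim : forall ss, all (mem S) ss ->
    (foldr (kstep S J) (w, z) ss).1 \in minrep S J /\
    exists2 v, v \in <<J>> & (foldr (kstep S J) (w, z) ss).2 = conjI v z.
    elim=> [|a ss' IH] /=; first by move=> _; split => //; exists 1; [exact: group1 | rewrite (conjI1 Ha)].
    case/andP=> HaS /IH [].
    case: (foldr (kstep S J) (w, z) ss') => x y /= Hx [v Hv ->].
    rewrite /kstep /=; case: ifP => Hm /=.
      by split => //; exists v.
    have Ht := deodhar HS HJ Hx HaS (negbT Hm).
    split => //; exists ((x^-1 * a * x) * v); first by rewrite groupM // mem_gen.
    rewrite (step_conj Ha Ht) //; apply: (Sinv HS); exact: (subsetP HJ).
  have [_ [v Hv Ev]] := claim ss Hss.
  by exists v; rewrite // -Ev -E.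
case=> v Hv ->.
have [vs [Hvs Ev]] := gen_word Hv.
have /minrepP [Hwg _] := Hw; have /minrepP [Hwg' _] := Hw'.
have [rw [Hrw Erw Ew]] := red_word Hwg.
have [rw' [Hrw' Erw' Ew']] := red_word Hwg'.
have Hg : good S J rw by apply/and3P; split => //; rewrite -Ew ?Erw.
have Hg' : good S J rw' by apply/and3P; split => //; rewrite -Ew' ?Erw'.
exists (rw' ++ (vs ++ rev rw)); split.
  rewrite !all_cat Hrw' all_rev Hrw andbT /=.
  by apply: sub_all Hvs => x /= Hx; apply: (subsetP HJ).
rewrite !foldr_cat.
have := @down_aux _ S J HS HJ rw [::] z; rewrite cats0 -Ew => -> //.
rewrite pr_nil (conj_aux HS HJ Ha Hvs) -Ev.
rewrite up_aux ?Ew' //.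
by exists [::].
Qed.
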